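(* Let $p$ be an odd prime and let $G$ be a quasi-powerful $p$-group. Then $G^{p}=\{g^{p}\mid g\in G\}$.
   Context: For an odd prime $p$, a finite $p$-group $G$ is powerful if $[G,G]\le G^{p}$, where $G^{p}=\langle g^{p}\mid g\in G\rangle$, and $G$ is quasi-powerful if $G/Z(G)$ is powerful. *)

(* Defs.v *)
From mathcomp Require Import all_boot all_fingroup all_solvable.
Set Implicit Arguments. Unset Strict Implicit. Unset Printing Implicit Defensive.
Local Open Scope group_scope.

Definition pth_powers (gT : finGroupType) (p : nat) (G : {set gT}) : {set gT} :=
  [set x ^+ p | x in G].

Definition power_subgroup (gT : finGroupType) (p : nat) (G : {set gT}) : {set gT} :=
  << pth_powers p G >>.

Definition powerful (gT : finGroupType) (p : nat) (G : {set gT}) : bool :=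
  [~: G, G] \subset power_subgroup p G.

Definition quasi_powerful (gT : finGroupType) (p : nat) (G : {group gT}) : bool :=
  powerful p (G / 'Z(G)).

(* Main.v *)
Require Import Defs.
From mathcomp Require Import all_boot all_fingroup all_solvable.
Set Implicit Arguments. Unset Strict Implicit. Unset Printing Implicit Defensive.
Local Open Scope group_scope.

Lemma pow_comm_central (T : finGroupType) (p : nat) (X Y : T) :
  odd p -> commute [~ [~ X, Y], X] X -> commute [~ [~ X, Y], X] [~ X, Y] ->
  [~ X, Y] ^+ p = 1 -> [~ X ^+ p, Y] = 1.
Proof.
move=> op cCX cCU Up1.
set U := [~ X, Y] in cCX cCU Up1 *; set C := [~ U, X] in cCX cCU *.
have Cp1 : C ^+ p = 1.
  have : (U ^ X) ^+ p = 1 by rewrite -conjXg Up1 conj1g.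
  by rewrite conjg_mulR -/C expgMn ?Up1 ?mul1g //; apply/commute_sym.
rewrite commgEl conjXg conjg_mulR -/U expMg_Rmul; last 2 first.
- by apply/commute_sym.
- by apply/commute_sym.
by rewrite -/C Up1 mulg1 bin2odd // expgM Cp1 expg1n mulg1 mulVg.
Qed.

Lemma pow_mul_class2 (T : finGroupType) (p : nat) (A B : T) :
  odd p -> commute [~ B, A] A -> commute [~ B, A] B -> [~ B, A] ^+ p = 1 ->
  (A * B) ^+ p = A ^+ p * B ^+ p.
Proof.
move=> op cA cB Cp1.
rewrite expMg_Rmul; last 2 first.
- by apply/commute_sym.
- by apply/commute_sym.
by rewrite bin2odd // expgM Cp1 expg1n mulg1.
Qed.

Section Key.
Variables (gT : finGroupType) (p : nat) (G : {group gT}).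
Hypotheses (pr_p : prime p) (odd_p : odd p) (pG : p.-group G)
  (qpG : [~: G, G] \subset 'Z(G) * 'Mho^1(G)).

Let K := 'Mho^1(G).
Let Z := 'Z(G).
Let L := (Z <*> K)%G.
Let V := 'Mho^1(L)%G.

Let nKG : K <| G. Proof. exact: Mho_normal. Qed.
Let nZG : Z <| G. Proof. exact: center_normal. Qed.
Let nLG : L <| G. Proof. exact: normalY. Qed.
Let sLG : L \subset G. Proof. exact: normal_sub nLG. Qed.
Let nVG : V <| G. Proof. exact: char_normal_trans (Mho_char 1 L) nLG. Qed.
Let LE : L :=: Z * K.
Proof. apply: cent_joinEl; exact: subset_trans (subsetIr _ _) (centS (Mho_sub 1 G)). Qed.
Let sG'L : [~: G, G] \subset L. Proof. by rewrite LE. Qed.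

Let powL u : u \in L -> u ^+ p \in V.
Proof.
move=> Lu; have := Mho_p_elt 1 Lu (mem_p_elt (pgroupS sLG pG) Lu).
by rewrite expn1.
Qed.

Let LG_K : [~: L, G] \subset [~: K, G].
Proof.
rewrite LE commMG; last by rewrite normsRr // normal_sub.
have -> : [~: Z, G] = 1 by apply/commG1P; exact: subsetIr.
by rewrite mul1g.
Qed.


Lemma KG_V : [~: K, G] \subset V.
Proof.
set M := [~: K, G].
have nMG : G \subset 'N(M) by rewrite normsRr.
set R := ([~: M, G] <*> V)%G.
have nRG : G \subset 'N(R).
  by rewrite normsY // ?normsRr // normal_norm.
have sMGR : [~: M, G] \subset R by exact: joing_subl.
have sVR : V \subset R by exact: joing_subr.
have step1 : forall x y, x \in G -> y \in G -> [~ x ^+ p, y] \in R.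
  move=> x y Gx Gy.
  have Nx := subsetP nRG x Gx; have Ny := subsetP nRG y Gy.
  have Gu : [~ x, y] \in G by rewrite groupR.
  have Lu : [~ x, y] \in L by apply: (subsetP sG'L); rewrite mem_commg.
  have Mc : [~ [~ x, y], x] \in M by apply: (subsetP LG_K); rewrite mem_commg.
  have Gc : [~ [~ x, y], x] \in G by rewrite groupR.
  have cen : forall g, g \in G -> coset R [~ [~ [~ x, y], x], g] = 1.
    move=> g Gg; apply: coset_id.
    by apply: (subsetP sMGR); rewrite mem_commg.
  apply: coset_idr; first by rewrite (subsetP nRG) // groupR // groupX.
  rewrite morphR ?morphX ?groupX //.
  have cX : commute [~ [~ coset R x, coset R y], coset R x] (coset R x).
    apply/commgP; rewrite -!morphR ?groupR //.
    by apply/eqP; apply: cen.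
  have cU : commute [~ [~ coset R x, coset R y], coset R x] [~ coset R x, coset R y].
    apply/commgP; rewrite -!morphR ?groupR //.
    by apply/eqP; apply: cen; rewrite groupR.
  have Up : [~ coset R x, coset R y] ^+ p = 1.
    rewrite -morphR // -morphX ?groupR //; apply: coset_id.
    by apply: (subsetP sVR); apply: powL.
  exact: (pow_comm_central odd_p cX cU Up).
have sMR : M \subset R.
  have nRK : K \subset 'N(R) := subset_trans (normal_sub nKG) nRG.
  rewrite -quotient_cents2 //.
  rewrite /K (MhoE 1 pG) expn1 quotient_gen; last first.
    by apply/subsetP=> _ /imsetP[x Gx ->]; rewrite (subsetP nRG) ?groupX.
  rewrite gen_subG; apply/subsetP=> _ /morphimP[xp Nxp /imsetP[x Gx ->] ->].
  apply/centP=> _ /morphimP[y Ny Gy ->]; apply/commgP.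
  have Nxp' : x ^+ p \in 'N(R) by rewrite (subsetP nRG) ?groupX.
  rewrite -morphR //; apply/eqP.
  have h : coset R [~ x ^+ p, y] = 1 := coset_id (step1 _ _ Gx Gy).
  exact: h.
have nVG' : G \subset 'N(V) := normal_norm nVG.
have sMG : M \subset G.
  by rewrite (subset_trans _ (normal_sub nKG)) // commg_subl normal_norm.
have nVM : M \subset 'N(V) := subset_trans sMG nVG'.
suff: M / V \subset [1] by rewrite quotient_sub1.
have nilG : nilpotent (G / V) := pgroup_nil (quotient_pgroup V pG).
have [-> // | ntM] := eqVneq (M / V) 1.
have prop : [~: M / V, G / V] \proper M / V.
  apply: nil_comm_properl nilG (quotientS V sMG) ntM _.
  by rewrite subsetI subxx quotient_norms.
have sub : M / V \subset [~: M / V, G / V].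
  rewrite -quotientR //; apply: subset_trans (quotientS V sMR) _.
  rewrite /R quotientYidr //.
  exact: subset_trans (comm_subG sMG (subxx _)) nVG'.
by have := proper_subn prop; rewrite sub.
Qed.


Lemma LG_V : [~: L, G] \subset V.
Proof. exact: subset_trans LG_K KG_V. Qed.

Lemma powprod a b : a \in G -> b \in G ->
  ((a * b) ^+ p)^-1 * (a ^+ p * b ^+ p) \in V.
Proof.
move=> Ga Gb.
have nVG' : G \subset 'N(V) := normal_norm nVG.
have Na := subsetP nVG' a Ga; have Nb := subsetP nVG' b Gb.
have Gba : [~ b, a] \in G by rewrite groupR.
have Lba : [~ b, a] \in L by apply: (subsetP sG'L); rewrite mem_commg.
have cen : forall g, g \in G -> coset V [~ [~ b, a], g] = 1.
  move=> g Gg; apply: coset_id; apply: (subsetP LG_V); exact: mem_commg.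
have cA : commute [~ coset V b, coset V a] (coset V a).
  by apply/commgP; rewrite -!morphR ?groupR //; apply/eqP; apply: cen.
have cB : commute [~ coset V b, coset V a] (coset V b).
  by apply/commgP; rewrite -!morphR ?groupR //; apply/eqP; apply: cen.
have Cp : [~ coset V b, coset V a] ^+ p = 1.
  rewrite -morphR // -morphX ?groupR //; apply: coset_id; exact: powL.
have E := pow_mul_class2 odd_p cA cB Cp.
apply: coset_idr; first by rewrite (subsetP nVG') // !groupM ?groupV ?groupX ?groupM.
have NG : forall g, g \in G -> g \in 'N(V) := subsetP nVG'.
rewrite morphM ?NG ?groupV ?groupX ?groupM //.
rewrite morphV ?NG ?groupX ?groupM //.
rewrite morphM ?NG ?groupX //.
rewrite !morphX ?NG ?groupM // morphM ?NG ?groupX //.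
  rewrite E mulVg //.
all: by rewrite ?groupX ?groupM.
Qed.


Lemma H_props c : c \in G ->
  (<[c]> <*> L)%G \subset G /\
  [~: (<[c]> <*> L)%G, (<[c]> <*> L)%G] \subset
     'Z((<[c]> <*> L)%G) * 'Mho^1((<[c]> <*> L)%G).
Proof.
move=> Gc.
have nVG' : G \subset 'N(V) := normal_norm nVG.
have sCG : <[c]> \subset G by rewrite cycle_subG.
have sHG : (<[c]> <*> L)%G \subset G by rewrite join_subG sCG sLG.
split=> //.
have sH'V : [~: (<[c]> <*> L)%G, (<[c]> <*> L)%G] \subset V.
  apply: der1_min; first exact: subset_trans sHG nVG'.
  rewrite /= quotientY ?(subset_trans sCG nVG') ?(subset_trans sLG nVG') //.
  have cLG : L / V \subset 'C(G / V) := quotient_cents2r LG_V.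
  rewrite abelianY quotient_abelian ?cycle_abelian //=.
  rewrite /abelian (subset_trans cLG (centS (quotientS V sLG))) /=.
  exact: subset_trans cLG (centS (quotientS V sCG)).
apply: subset_trans sH'V _; apply: subset_trans (mulG_subr _ _).
by apply: MhoS; exact: joing_subr.
Qed.

Lemma abel_case c : c \in G -> (<[c]> <*> L)%G :=: G -> abelian G.
Proof.
move=> Gc HG.
have sCG : <[c]> \subset G by rewrite cycle_subG.
have sKPhi : K \subset 'Phi(G) by rewrite (Phi_joing pG) joing_subr.
have E : 'Phi(G) <*> (<[c]> <*> Z) = G.
  apply/eqP; rewrite eqEsubset join_subG Phi_sub join_subG sCG normal_sub //=.
  rewrite -{1}HG /= join_subG; apply/andP; split.
    exact: subset_trans (joing_subl _ _) (joing_subr _ _).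
  rewrite join_subG; apply/andP; split.
    exact: subset_trans (joing_subr _ _) (joing_subr _ _).
  exact: subset_trans sKPhi (joing_subl _ _).
have := Phi_nongen E; rewrite genGid => <-.
rewrite abelianY cycle_abelian center_abelian /=.
exact: subset_trans (subsetIr _ _) (centS sCG).
Qed.

End Key.

Lemma main_ind (gT : finGroupType) (p : nat) : prime p -> odd p ->
  forall n (G : {group gT}), #|G| <= n -> p.-group G ->
  [~: G, G] \subset 'Z(G) * 'Mho^1(G) -> 'Mho^1(G) \subset [set x ^+ p | x in G].
Proof.
move=> pr_p odd_p; elim=> [|n IH] G.
  by rewrite leqNgt cardG_gt0.
move=> leG pG qpG.
have closed : forall a b, a \in G -> b \in G -> a ^+ p * b ^+ p \in [set x ^+ p | x in G].
  move=> a b Ga Gb.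
  have Gc : a * b \in G by rewrite groupM.
  have [sHG qpH] := H_props odd_p pG qpG Gc.
  have [HG | neHG] := eqVneq (gval (<[a * b]> <*> ('Z(G) <*> 'Mho^1(G)))%G) (gval G).
    have abG := abel_case pG Gc HG.
    rewrite -expgMn; first by apply: imset_f.
    exact: (centsP abG).
  have ltH : #|(<[a * b]> <*> ('Z(G) <*> 'Mho^1(G)))%G| < #|G|.
    by apply: proper_card; rewrite properEneq neHG sHG.
  have pH := pgroupS sHG pG.
  have sub := IH _ (leq_trans (leq_trans ltH leG) (leqnn _)) pH qpH.
  apply: (subsetP (imsetS _ sHG)); apply: (subsetP sub).
  rewrite -(mulKVg ((a * b) ^+ p) (a ^+ p * b ^+ p)) groupM //.
    have Hc : a * b \in (<[a * b]> <*> ('Z(G) <*> 'Mho^1(G)))%G.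
      by apply: (subsetP (joing_subl _ _)); exact: cycle_id.
    by have := Mho_p_elt 1 Hc (mem_p_elt pH Hc); rewrite expn1.
  apply: (subsetP (MhoS 1 (joing_subr _ _))).
  exact (powprod odd_p pG qpG Ga Gb).
have gS : group_set [set x ^+ p | x in G].
  apply/group_setP; split.
    by apply/imsetP; exists 1; rewrite ?expg1n.
  move=> _ _ /imsetP[a Ga ->] /imsetP[b Gb ->]; exact: closed.
by rewrite (MhoE 1 pG) expn1 gen_set_id.
Qed.

Theorem theorem4p6 (gT : finGroupType) (p : nat) (G : {group gT}) :
  prime p -> odd p -> p.-group G -> quasi_powerful p G ->
  power_subgroup p G = pth_powers p G.
Proof.
move=> pr_p odd_p pG qp.
have nZG : G \subset 'N('Z(G)) := normal_norm (center_normal G).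
have qpG : [~: G, G] \subset 'Z(G) * 'Mho^1(G).
  move: qp; rewrite /quasi_powerful /powerful /power_subgroup /pth_powers.
  have E := MhoE 1 (quotient_pgroup 'Z(G) pG); rewrite expn1 in E.
  have M : 'Mho^1(G) / 'Z(G) = 'Mho^1(G / 'Z(G)) by apply: morphim_Mho.
  rewrite -E -M -quotientR // quotientSK //.
  exact: subset_trans (der_sub 1 G) nZG.
have sub := main_ind pr_p odd_p (leqnn #|G|) pG qpG.
rewrite /power_subgroup /pth_powers; apply/eqP; rewrite eqEsubset subset_gen andbT.
have E := MhoE 1 pG; rewrite expn1 in E.
by rewrite -E.
Qed.
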